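(* Let $N\ge1$, $\mathbf{S}=(\mathsf{SNR}_{s,r},\mathsf{SNR}_{s,1},\dots,\mathsf{SNR}_{s,N},\mathsf{SNR}_{r,1},\dots,\mathsf{SNR}_{r,N})\in[0,\infty)^{2N+1}$, $\rho\in[0,1]$, $\mathsf{C}(x)=\tfrac12\log(1+x)$, and for $j=1,\dots,N$ $$f_j(\rho,\mathbf{S})=\mathsf{SNR}_{s,j}+\mathsf{SNR}_{r,j}+2\rho\sqrt{\mathsf{SNR}_{s,j}\mathsf{SNR}_{r,j}},\qquad g_j(\rho,\mathbf{S})=(1-\rho^2)(\mathsf{SNR}_{s,j}+\mathsf{SNR}_{s,r}),$$ $$R_{CS}(\rho,\mathbf{S})=\min_{1\le j\le N}\min\big(\mathsf{C}(f_j(\rho,\mathbf{S})),\mathsf{C}(g_j(\rho,\mathbf{S}))\big).$$ Then $R_{CS}(\rho,\mathbf{S})$ is concave in $\rho\in[0,1]$ for fixed $\mathbf{S}$, concave in $\mathbf{S}\in[0,\infty)^{2N+1}$ for fixed $\rho$, and the map $(t,\mathbf{S})\mapsto R_{CS}(\sqrt t,\mathbf{S})$ is quasi-concave on $[0,1]\times[0,\infty)^{2N+1}$ (i.e., $R_{CS}$ is quasi-concave in $(\rho^2,\mathbf{S})$).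
   Context: $R_{CS}$ is the cut-set bound expression for a real AWGN multicast relay channel with source $s$, relay $r$, destinations $1,\dots,N$, link SNRs $\mathsf{SNR}_{u,v}\ge0$, and source–relay input correlation coefficient $\rho$. A function $F$ on a convex set is quasi-concave if $F(\lambda x_1+(1-\lambda)x_2)\ge\min(F(x_1),F(x_2))$ for all $x_1,x_2$ and $\lambda\in[0,1]$. *)

(* Defs.v *)
From Stdlib Require Import Reals.
Open Scope R_scope.

Definition Ccap (x : R) : R := / 2 * (ln (1 + x) / ln 2).

(* The SNR vector S in [0,oo)^(2N+1) is given by
   ssr = SNR_{s,r},
   ss j = SNR_{s,j+1}, sr j = SNR_{r,j+1}  for j = 0..N-1
   (values of ss, sr at j >= N are irrelevant). *)
Definition f_j (rho : R) (ss sr : nat -> R) (j : nat) : R :=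
  ss j + sr j + 2 * rho * sqrt (ss j * sr j).

Definition g_j (rho : R) (ssr : R) (ss : nat -> R) (j : nat) : R :=
  (1 - rho ^ 2) * (ss j + ssr).

Fixpoint min_upto (F : nat -> R) (n : nat) : R :=
  match n with
  | O => F O
  | S k => Rmin (min_upto F k) (F (S k))
  end.

Definition R_CS (N : nat) (rho ssr : R) (ss sr : nat -> R) : R :=
  min_upto (fun j => Rmin (Ccap (f_j rho ss sr j)) (Ccap (g_j rho ssr ss j)))
           (N - 1).

Definition S_nonneg (N : nat) (ssr : R) (ss sr : nat -> R) : Prop :=
  0 <= ssr /\ (forall j, (j < N)%nat -> 0 <= ss j /\ 0 <= sr j).

Definition cmb (lam : R) (u v : nat -> R) : nat -> R :=
  fun j => lam * u j + (1 - lam) * v j.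

(* Main.v *)
Require Import Defs.
From Stdlib Require Import Reals Lra Psatz Lia.
Open Scope R_scope.
Lemma sq_ge X Z M : 0 <= Z -> X >= Z -> 4*M <= (2*Z)^2 -> M <= X^2.
Proof. intros. nra. Qed.

Lemma E_core A B U p q : 0<=A+p -> 0<=B+q -> 0<A -> 0<B -> 0<U ->
  0 <= (A*B*(p+q) + U*(A*q+B*p) + U*p*q)^2 - U^2*(((A+p)*q)*((B+q)*p)).
Proof.
intros Ha Hb HA HB HU.
assert (Em : ((A+p)*q)*((B+q)*p) = (A+p)*(B+q)*(p*q)) by ring.
assert (Hab : 0 <= (A+p)*(B+q)) by (apply Rmult_le_pos; lra).
assert (H4 : 4*(((A+p)*q)*((B+q)*p)) <= ((A+p)*q + (B+q)*p)^2)
    by (pose proof (pow2_ge_0 ((A+p)*q - (B+q)*p)); lra).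
destruct (Rle_dec 0 p) as [Hp|Hp]; destruct (Rle_dec 0 q) as [Hq|Hq].
- assert (H1 : A*B*(p+q) + U*(A*q+B*p) + U*p*q >= U*((A+p)*q + (B+q)*p)/2).
  { assert (0 <= A*B*(p+q)) by (apply Rmult_le_pos; nra).
    assert (0 <= U*(A*q+B*p)) by (apply Rmult_le_pos; nra). nra. }
  assert (H2 : 0 <= U*((A+p)*q + (B+q)*p)/2) by (apply Rmult_le_pos; [apply Rmult_le_pos|]; nra).
  assert (U ^ 2 * ((A + p) * q * ((B + q) * p)) <= (A*B*(p+q) + U*(A*q+B*p) + U*p*q)^2).
  { apply (sq_ge _ _ _ H2 H1). 
    replace ((2 * (U * ((A + p) * q + (B + q) * p) / 2)) ^ 2) with (U^2 * ((A + p) * q + (B + q) * p)^2) by field.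
    replace (4 * (U ^ 2 * ((A + p) * q * ((B + q) * p)))) with (U^2 * (4*((A + p) * q * ((B + q) * p)))) by ring.
    apply Rmult_le_compat_l; [nra|exact H4]. }
  lra.
- assert (p*q <= 0) by nra.
  assert (0 <= (A+p)*(B+q)*(-(p*q))) by (apply Rmult_le_pos; lra).
  assert (0 <= U^2 * (-(((A+p)*q)*((B+q)*p)))) by (apply Rmult_le_pos; [nra|rewrite Em; lra]).
  pose proof (pow2_ge_0 (A*B*(p+q) + U*(A*q+B*p) + U*p*q)). lra.
- assert (p*q <= 0) by nra.
  assert (0 <= (A+p)*(B+q)*(-(p*q))) by (apply Rmult_le_pos; lra).
  assert (0 <= U^2 * (-(((A+p)*q)*((B+q)*p)))) by (apply Rmult_le_pos; [nra|rewrite Em; lra]).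
  pose proof (pow2_ge_0 (A*B*(p+q) + U*(A*q+B*p) + U*p*q)). lra.
- assert (H1 : -(A*B*(p+q) + U*(A*q+B*p) + U*p*q) >= U*(-((A+p)*q + (B+q)*p))/2).
  { assert (0 <= A*B*(-(p+q))) by (apply Rmult_le_pos; [nra|lra]).
    assert (0 <= U*A*(-q)) by (apply Rmult_le_pos; [apply Rmult_le_pos|]; lra).
    assert (0 <= U*B*(-p)) by (apply Rmult_le_pos; [apply Rmult_le_pos|]; lra).
    lra. }
  assert (H2 : 0 <= U*(-((A+p)*q + (B+q)*p))/2).
  { assert (0 <= (A+p)*(-q)) by (apply Rmult_le_pos; lra).
    assert (0 <= (B+q)*(-p)) by (apply Rmult_le_pos; lra).
    apply Rmult_le_pos; [apply Rmult_le_pos|]; nra. }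
  assert (U ^ 2 * ((A + p) * q * ((B + q) * p)) <= (-(A*B*(p+q) + U*(A*q+B*p) + U*p*q))^2).
  { apply (sq_ge _ _ _ H2 H1). 
    replace ((2 * (U * (-((A + p) * q + (B + q) * p)) / 2)) ^ 2) with (U^2 * ((A + p) * q + (B + q) * p)^2) by field.
    replace (4 * (U ^ 2 * ((A + p) * q * ((B + q) * p)))) with (U^2 * (4*((A + p) * q * ((B + q) * p)))) by ring.
    apply Rmult_le_compat_l; [nra|exact H4]. }
  replace ((-(A*B*(p+q) + U*(A*q+B*p) + U*p*q))^2) with ((A*B*(p+q) + U*(A*q+B*p) + U*p*q)^2) in H by ring.
  lra.
Qed.

Lemma endpoint t a b A B U : 0<=t -> 0<=a -> 0<=b -> 0<A -> 0<B -> 0<U ->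
  U + A + B <= a + b + 2*sqrt t * sqrt (a*b) ->
  U^2*A*B + 2*A*B*U*(U+A+B-a-b) - U^2*(B*a + A*b) <= 4*A^2*B^2*t.
Proof.
intros Ht Ha Hb HA HB HU H.
assert (H4t : 0 <= 4*A^2*B^2*t) by (apply Rmult_le_pos; [nra|lra]).
destruct (Rle_dec (U+A+B-a-b) 0) as [Hu|Hu].
- assert (K : U*A*B + 2*A*B*(U+A+B-a-b) - U*(B*a+A*b) <= 0).
  { assert (2*A*B*(U+A+B-a-b) <= 0).
    { assert (0 <= 2*A*B*(-(U+A+B-a-b))) by (apply Rmult_le_pos; [nra|lra]). lra. }
    destruct (Rle_dec A a).
    + assert (U*B*A <= U*B*a) by (apply Rmult_le_compat_l; [nra|lra]).
      assert (0 <= U*A*b) by (apply Rmult_le_pos; [nra|lra]). lra.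
    + assert (U*A*B <= U*A*b) by (apply Rmult_le_compat_l; [nra|lra]).
      assert (0 <= U*B*a) by (apply Rmult_le_pos; [nra|lra]). lra. }
  assert (U*(U*A*B + 2*A*B*(U+A+B-a-b) - U*(B*a+A*b)) <= 0).
  { assert (0 <= U*(-(U*A*B + 2*A*B*(U+A+B-a-b) - U*(B*a+A*b)))) by (apply Rmult_le_pos; lra). lra. }
  nra.
- set (u := U+A+B-a-b) in *.
  pose proof (sqrt_pos t) as Hs. pose proof (sqrt_pos (a*b)) as Hr.
  assert (Hst : sqrt t * sqrt t = t) by (apply sqrt_sqrt; lra).
  assert (Hrr : sqrt (a*b) * sqrt (a*b) = a*b) by (apply sqrt_sqrt; nra).
  assert (Hsr : u <= 2*sqrt t * sqrt (a*b)) by (unfold u; lra).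
  assert (Hsq : u*u <= 4*t*(a*b)).
  { replace (4*t*(a*b)) with ((2*sqrt t*sqrt (a*b))*(2*sqrt t*sqrt (a*b))) by (transitivity (4*(sqrt t*sqrt t)*(sqrt (a*b)*sqrt (a*b))); [ring| rewrite Hst, Hrr; ring]).
    apply Rmult_le_compat; lra. }
  assert (Hab : 0 < a*b).
  { destruct (Rle_lt_or_eq_dec 0 (a*b)) as [|E]; [nra|assumption|].
    rewrite <- E in Hrr. assert (sqrt (a*b) = 0) by nra. rewrite H0 in Hsr. lra. }
  pose proof (E_core A B U (a-A) (b-B)) as EC.
  replace (A + (a - A)) with a in EC by ring. replace (B + (b - B)) with b in EC by ring.
  specialize (EC Ha Hb HA HB HU).
  assert (HEq : (A * B * (a - A + (b - B)) + U * (A * (b - B) + B * (a - A)) + U * (a - A) * (b - B)) ^ 2 -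
     U ^ 2 * (a * (b - B) * (b * (a - A)))
     = A^2*B^2*(u*u) - (a*b)*(U^2*A*B + 2*A*B*U*u - U^2*(B*a + A*b))) by (unfold u; ring).
  rewrite HEq in EC.
  assert (A^2*B^2*(u*u) <= A^2*B^2*(4*t*(a*b))) by (apply Rmult_le_compat_l; [nra|lra]).
  assert ((a*b)*(U^2*A*B + 2*A*B*U*u - U^2*(B*a + A*b)) <= (a*b)*(4*A^2*B^2*t)) by nra.
  apply Rmult_le_reg_l with (a*b); lra.
Qed.

Lemma sq_le_root U w : 0 <= w -> U*U <= w*w -> U <= w.
Proof. intros. destruct (Rle_dec U w); [assumption|]. nra. Qed.

Definition FF (t a b : R) := a + b + 2 * sqrt t * sqrt (a*b).

Lemma FF_ge_sum t a b : a + b <= FF t a b.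
Proof. unfold FF. pose proof (sqrt_pos t). pose proof (sqrt_pos (a*b)). nra. Qed.

Lemma FF_a0 t b : FF t 0 b = b.
Proof. unfold FF. replace (0*b) with 0 by ring. rewrite sqrt_0. ring. Qed.
Lemma FF_b0 t a : FF t a 0 = a.
Proof. unfold FF. replace (a*0) with 0 by ring. rewrite sqrt_0. ring. Qed.

Lemma QF t1 a1 b1 t2 a2 b2 l c :
  0<=t1 -> 0<=t2 -> 0<=a1 -> 0<=b1 -> 0<=a2 -> 0<=b2 -> 0<=l<=1 ->
  c <= FF t1 a1 b1 -> c <= FF t2 a2 b2 ->
  c <= FF (l*t1+(1-l)*t2) (l*a1+(1-l)*a2) (l*b1+(1-l)*b2).
Proof.
intros Ht1 Ht2 Ha1 Hb1 Ha2 Hb2 Hl H1 H2.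
set (A := l*a1+(1-l)*a2). set (B := l*b1+(1-l)*b2). set (T := l*t1+(1-l)*t2).
destruct (Rle_dec c (A+B)) as [Hc|Hc].
{ pose proof (FF_ge_sum T A B). lra. }
destruct (Req_dec l 0) as [E0|E0].
{ subst A B T. rewrite E0 in *. 
  replace (0*t1+(1-0)*t2) with t2 by ring. replace (0*a1+(1-0)*a2) with a2 by ring.
  replace (0*b1+(1-0)*b2) with b2 by ring. assumption. }
destruct (Req_dec l 1) as [E1|E1].
{ subst A B T. rewrite E1 in *. 
  replace (1*t1+(1-1)*t2) with t1 by ring. replace (1*a1+(1-1)*a2) with a1 by ring.
  replace (1*b1+(1-1)*b2) with b1 by ring. assumption. }
assert (Hl' : 0 < l < 1) by lra.
assert (HA : 0 < A).
{ destruct (Rle_lt_or_eq_dec 0 A) as [|EA]; [unfold A; nra|assumption|].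
  assert (a1 = 0) by (unfold A in EA; nra). assert (a2 = 0) by (unfold A in EA; nra).
  subst a1 a2. rewrite FF_a0 in H1, H2. exfalso. apply Hc. unfold A, B. nra. }
assert (HB : 0 < B).
{ destruct (Rle_lt_or_eq_dec 0 B) as [|EB]; [unfold B; nra|assumption|].
  assert (b1 = 0) by (unfold B in EB; nra). assert (b2 = 0) by (unfold B in EB; nra).
  subst b1 b2. rewrite FF_b0 in H1, H2. exfalso. apply Hc. unfold A, B. nra. }
set (U := c - A - B).
assert (HU : 0 < U) by (unfold U; lra).
pose proof (endpoint t1 a1 b1 A B U Ht1 Ha1 Hb1 HA HB HU) as K1.
pose proof (endpoint t2 a2 b2 A B U Ht2 Ha2 Hb2 HA HB HU) as K2.
unfold FF in H1, H2.
replace (U + A + B) with c in K1, K2 by (unfold U; ring).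
specialize (K1 H1). specialize (K2 H2).
assert (Hcomb : U^2*A*B <= 4*A^2*B^2*T).
{ assert (l*(U ^ 2 * A * B + 2 * A * B * U * (c - a1 - b1) - U ^ 2 * (B * a1 + A * b1)) <= l*(4 * A ^ 2 * B ^ 2 * t1)) by (apply Rmult_le_compat_l; lra).
  assert ((1-l)*(U ^ 2 * A * B + 2 * A * B * U * (c - a2 - b2) - U ^ 2 * (B * a2 + A * b2)) <= (1-l)*(4 * A ^ 2 * B ^ 2 * t2)) by (apply Rmult_le_compat_l; lra).
  assert (E : l*(U ^ 2 * A * B + 2 * A * B * U * (c - a1 - b1) - U ^ 2 * (B * a1 + A * b1)) + (1-l)*(U ^ 2 * A * B + 2 * A * B * U * (c - a2 - b2) - U ^ 2 * (B * a2 + A * b2)) = U^2*A*B).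
  { unfold U, A, B. ring. }
  assert (E2 : l*(4 * A ^ 2 * B ^ 2 * t1) + (1-l)*(4 * A ^ 2 * B ^ 2 * t2) = 4*A^2*B^2*T) by (unfold T; ring).
  lra. }
assert (HT : 0 <= T) by (unfold T; nra).
assert (HUU : U*U <= 4*T*(A*B)).
{ apply Rmult_le_reg_l with (A*B); [nra|]. nra. }
unfold FF.
assert (U <= 2*sqrt T*sqrt (A*B)).
{ apply sq_le_root.
  - pose proof (sqrt_pos T). pose proof (sqrt_pos (A*B)). nra.
  - replace (2 * sqrt T * sqrt (A * B) * (2 * sqrt T * sqrt (A * B))) with (4*(sqrt T*sqrt T)*(sqrt (A*B)*sqrt (A*B))) by ring.
    rewrite !sqrt_sqrt by nra. lra. }
unfold U in *. lra.
Qed.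
Lemma ln_le_xm1 x : 0 < x -> ln x <= x - 1.
Proof. intros. pose proof (exp_ineq1_le (ln x)). rewrite exp_ln in H0 by lra. lra. Qed.

Lemma ln_mono x y : 0 < x -> x <= y -> ln x <= ln y.
Proof. intros. destruct (Rle_lt_or_eq_dec x y H0) as [h|h]. left; apply ln_increasing; lra. subst; lra. Qed.

Lemma ln_conc u v l : 0 < u -> 0 < v -> 0 <= l <= 1 ->
  l * ln u + (1-l) * ln v <= ln (l*u + (1-l)*v).
Proof.
intros Hu Hv Hl. set (w := l*u+(1-l)*v).
assert (Hw : 0 < w) by (unfold w; destruct (Req_dec l 0); [subst; lra| nra]).
assert (Ku : ln u <= ln w + (u/w - 1)).
{ replace u with (w * (u/w)) at 1 by (field; lra).
  rewrite ln_mult by (try apply Rdiv_lt_0_compat; lra).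
  pose proof (ln_le_xm1 (u/w)). assert (0 < u/w) by (apply Rdiv_lt_0_compat; lra). specialize (H H0). lra. }
assert (Kv : ln v <= ln w + (v/w - 1)).
{ replace v with (w * (v/w)) at 1 by (field; lra).
  rewrite ln_mult by (try apply Rdiv_lt_0_compat; lra).
  pose proof (ln_le_xm1 (v/w)). assert (0 < v/w) by (apply Rdiv_lt_0_compat; lra). specialize (H H0). lra. }
assert (l*ln u <= l*(ln w + (u/w-1))) by (apply Rmult_le_compat_l; lra).
assert ((1-l)*ln v <= (1-l)*(ln w + (v/w-1))) by (apply Rmult_le_compat_l; lra).
assert (E : l*(ln w + (u/w-1)) + (1-l)*(ln w + (v/w-1)) = ln w) by (unfold w in *; field; lra).
lra.
Qed.

Lemma ln2_pos : 0 < ln 2.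
Proof. pose proof ln_lt_2. lra. Qed.

Lemma Ccap_eq x : Ccap x = / (2 * ln 2) * ln (1 + x).
Proof. unfold Ccap. pose proof ln2_pos. field. lra. Qed.

Lemma Ccap_mono x y : 0 <= x -> x <= y -> Ccap x <= Ccap y.
Proof.
intros. rewrite !Ccap_eq. apply Rmult_le_compat_l.
- left. apply Rinv_0_lt_compat. pose proof ln2_pos. lra.
- apply ln_mono; lra.
Qed.

Lemma Ccap_conc x y l : 0 <= x -> 0 <= y -> 0 <= l <= 1 ->
  l * Ccap x + (1-l) * Ccap y <= Ccap (l*x + (1-l)*y).
Proof.
intros. rewrite !Ccap_eq.
replace (1 + (l*x + (1-l)*y)) with (l*(1+x) + (1-l)*(1+y)) by ring.
pose proof (ln_conc (1+x) (1+y) l ltac:(lra) ltac:(lra) H1).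
assert (0 < / (2 * ln 2)) by (apply Rinv_0_lt_compat; pose proof ln2_pos; lra).
assert (/ (2 * ln 2) * (l * ln (1 + x) + (1 - l) * ln (1 + y)) <= / (2 * ln 2) * ln (l * (1 + x) + (1 - l) * (1 + y))) by (apply Rmult_le_compat_l; lra).
nra.
Qed.

Lemma min_upto_le F n k : (k <= n)%nat -> min_upto F n <= F k.
Proof.
induction n; intros.
- inversion H. simpl. lra.
- simpl. destruct (Nat.eq_dec k (S n)).
  + subst. apply Rmin_r.
  + eapply Rle_trans. apply Rmin_l. apply IHn. lia.
Qed.

Lemma min_upto_ge F n m : (forall k, (k <= n)%nat -> m <= F k) -> m <= min_upto F n.
Proof.
induction n; intros.
- simpl. apply H. lia.
- simpl. apply Rmin_glb. apply IHn. intros; apply H; lia. apply H; lia.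
Qed.

Lemma conc_min F1 F2 F3 n l : 0 <= l <= 1 ->
  (forall k, (k <= n)%nat -> l * F1 k + (1-l) * F2 k <= F3 k) ->
  l * min_upto F1 n + (1-l) * min_upto F2 n <= min_upto F3 n.
Proof.
intros Hl H. apply min_upto_ge. intros k Hk.
pose proof (min_upto_le F1 n k Hk). pose proof (min_upto_le F2 n k Hk).
specialize (H k Hk).
assert (l * min_upto F1 n <= l * F1 k) by (apply Rmult_le_compat_l; lra).
assert ((1-l) * min_upto F2 n <= (1-l) * F2 k) by (apply Rmult_le_compat_l; lra).
lra.
Qed.

Lemma qc_min F1 F2 F3 n :
  (forall k, (k <= n)%nat -> Rmin (F1 k) (F2 k) <= F3 k) ->
  Rmin (min_upto F1 n) (min_upto F2 n) <= min_upto F3 n.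
Proof.
intros H. apply min_upto_ge. intros k Hk.
pose proof (min_upto_le F1 n k Hk). pose proof (min_upto_le F2 n k Hk).
specialize (H k Hk). unfold Rmin in *.
destruct (Rle_dec (min_upto F1 n) (min_upto F2 n)); destruct (Rle_dec (F1 k) (F2 k)); lra.
Qed.

Lemma rmin_conc p1 q1 p2 q2 pz qz l : 0 <= l <= 1 ->
  l*p1 + (1-l)*p2 <= pz -> l*q1 + (1-l)*q2 <= qz ->
  l * Rmin p1 q1 + (1-l) * Rmin p2 q2 <= Rmin pz qz.
Proof.
intros Hl Hp Hq.
assert (l*Rmin p1 q1 <= l*p1) by (apply Rmult_le_compat_l; [lra|apply Rmin_l]).
assert (l*Rmin p1 q1 <= l*q1) by (apply Rmult_le_compat_l; [lra|apply Rmin_r]).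
assert ((1-l)*Rmin p2 q2 <= (1-l)*p2) by (apply Rmult_le_compat_l; [lra|apply Rmin_l]).
assert ((1-l)*Rmin p2 q2 <= (1-l)*q2) by (apply Rmult_le_compat_l; [lra|apply Rmin_r]).
apply Rmin_glb; lra.
Qed.

Lemma rmin_qc p1 q1 p2 q2 pz qz :
  Rmin p1 p2 <= pz -> Rmin q1 q2 <= qz ->
  Rmin (Rmin p1 q1) (Rmin p2 q2) <= Rmin pz qz.
Proof. intros. unfold Rmin in *. repeat destruct Rle_dec; lra. Qed.

Lemma Ccap_qc x1 x2 xz : 0 <= x1 -> 0 <= x2 -> Rmin x1 x2 <= xz ->
  Rmin (Ccap x1) (Ccap x2) <= Ccap xz.
Proof.
intros. unfold Rmin in *. destruct (Rle_dec x1 x2).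
- eapply Rle_trans; [|apply Ccap_mono; [|exact H1]; lra].
  destruct Rle_dec; [lra|]. pose proof (Ccap_mono x1 x2 H r). lra.
- eapply Rle_trans; [|apply Ccap_mono; [|exact H1]; lra].
  destruct Rle_dec; [|lra]. pose proof (Ccap_mono x2 x1 H0 ltac:(lra)). lra.
Qed.

Lemma GM a1 b1 a2 b2 l : 0<=a1 -> 0<=b1 -> 0<=a2 -> 0<=b2 -> 0<=l<=1 ->
  l * sqrt (a1*b1) + (1-l) * sqrt (a2*b2) <= sqrt ((l*a1+(1-l)*a2)*(l*b1+(1-l)*b2)).
Proof.
intros.
set (s1 := sqrt (a1*b1)). set (s2 := sqrt (a2*b2)).
assert (K1 : s1*s1 = a1*b1) by (apply sqrt_sqrt; nra).
assert (K2 : s2*s2 = a2*b2) by (apply sqrt_sqrt; nra).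
assert (0 <= s1) by apply sqrt_pos. assert (0 <= s2) by apply sqrt_pos.
assert (K : 2*(s1*s2) <= a1*b2 + a2*b1).
{ apply sq_le_root. nra.
  replace (2*(s1*s2)*(2*(s1*s2))) with (4*(s1*s1)*(s2*s2)) by ring. rewrite K1, K2.
  pose proof (pow2_ge_0 (a1*b2 - a2*b1)). nra. }
assert (HP : 0 <= (l*a1+(1-l)*a2)*(l*b1+(1-l)*b2)) by (apply Rmult_le_pos; nra).
apply sq_le_root. apply sqrt_pos.
rewrite sqrt_sqrt by exact HP.
assert (0 <= l*(1-l)) by nra.
assert (l*(1-l)*(2*(s1*s2)) <= l*(1-l)*(a1*b2 + a2*b1)) by (apply Rmult_le_compat_l; lra).
replace ((l * s1 + (1 - l) * s2) * (l * s1 + (1 - l) * s2)) with (l*l*(s1*s1) + (1-l)*(1-l)*(s2*s2) + l*(1-l)*(2*(s1*s2))) by ring.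
rewrite K1, K2. nra.
Qed.

Lemma QP X1 Y1 X2 Y2 l : 0<=X1 -> 0<=Y1 -> 0<=X2 -> 0<=Y2 -> 0<=l<=1 ->
  Rmin (X1*Y1) (X2*Y2) <= (l*X1+(1-l)*X2)*(l*Y1+(1-l)*Y2).
Proof.
intros. set (m := Rmin (X1*Y1) (X2*Y2)).
assert (m <= X1*Y1) by apply Rmin_l. assert (m <= X2*Y2) by apply Rmin_r.
assert (0 <= m) by (unfold m, Rmin; destruct Rle_dec; nra).
assert (K : 2*m <= X1*Y2 + X2*Y1).
{ apply sq_le_root. nra.
  assert (m*m <= (X1*Y1)*(X2*Y2)) by (apply Rmult_le_compat; lra).
  pose proof (pow2_ge_0 (X1*Y2 - X2*Y1)). nra. }
assert (0 <= l*(1-l)) by nra.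
assert (l*(1-l)*(2*m) <= l*(1-l)*(X1*Y2 + X2*Y1)) by (apply Rmult_le_compat_l; lra).
assert (l*l*m <= l*l*(X1*Y1)) by (apply Rmult_le_compat_l; nra).
assert ((1-l)*(1-l)*m <= (1-l)*(1-l)*(X2*Y2)) by (apply Rmult_le_compat_l; nra).
replace ((l*X1+(1-l)*X2)*(l*Y1+(1-l)*Y2)) with (l*l*(X1*Y1) + (1-l)*(1-l)*(X2*Y2) + l*(1-l)*(X1*Y2+X2*Y1)) by ring.
nra.
Qed.

Lemma f_nonneg rho a b : 0 <= rho -> 0 <= a -> 0 <= b -> 0 <= a + b + 2*rho*sqrt (a*b).
Proof. intros. pose proof (sqrt_pos (a*b)). nra. Qed.

Theorem theorem1 (N : nat) (HN : (1 <= N)%nat) :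
  (forall (ssr : R) (ss sr : nat -> R), S_nonneg N ssr ss sr ->
   forall rho1 rho2 lam : R,
     0 <= rho1 <= 1 -> 0 <= rho2 <= 1 -> 0 <= lam <= 1 ->
     lam * R_CS N rho1 ssr ss sr + (1 - lam) * R_CS N rho2 ssr ss sr
       <= R_CS N (lam * rho1 + (1 - lam) * rho2) ssr ss sr)
  /\
  (forall rho : R, 0 <= rho <= 1 ->
   forall (ssr1 ssr2 : R) (ss1 sr1 ss2 sr2 : nat -> R) (lam : R),
     S_nonneg N ssr1 ss1 sr1 -> S_nonneg N ssr2 ss2 sr2 -> 0 <= lam <= 1 ->
     lam * R_CS N rho ssr1 ss1 sr1 + (1 - lam) * R_CS N rho ssr2 ss2 sr2
       <= R_CS N rho (lam * ssr1 + (1 - lam) * ssr2)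
                     (cmb lam ss1 ss2) (cmb lam sr1 sr2))
  /\
  (forall (t1 t2 ssr1 ssr2 : R) (ss1 sr1 ss2 sr2 : nat -> R) (lam : R),
     0 <= t1 <= 1 -> 0 <= t2 <= 1 ->
     S_nonneg N ssr1 ss1 sr1 -> S_nonneg N ssr2 ss2 sr2 -> 0 <= lam <= 1 ->
     Rmin (R_CS N (sqrt t1) ssr1 ss1 sr1) (R_CS N (sqrt t2) ssr2 ss2 sr2)
       <= R_CS N (sqrt (lam * t1 + (1 - lam) * t2))
                 (lam * ssr1 + (1 - lam) * ssr2)
                 (cmb lam ss1 ss2) (cmb lam sr1 sr2)).
Proof.
split; [|split].
- intros ssr ss sr [Hssr HS] rho1 rho2 l H1 H2 Hl.
  unfold R_CS. apply conc_min; [exact Hl|]. intros k Hk.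
  assert (Hk' : (k < N)%nat) by lia. destruct (HS k Hk') as [Ha Hb].
  apply rmin_conc; [exact Hl| |].
  + unfold f_j.
    replace (ss k + sr k + 2 * (l * rho1 + (1 - l) * rho2) * sqrt (ss k * sr k))
      with (l * (ss k + sr k + 2 * rho1 * sqrt (ss k * sr k)) + (1-l) * (ss k + sr k + 2 * rho2 * sqrt (ss k * sr k))) by ring.
    apply Ccap_conc; [apply f_nonneg; lra|apply f_nonneg; lra|exact Hl].
  + unfold g_j.
    eapply Rle_trans.
    * apply Ccap_conc; [| |exact Hl]; apply Rmult_le_pos; nra.
    * apply Ccap_mono.
      -- assert (0 <= (1 - rho1^2) * (ss k + ssr)) by (apply Rmult_le_pos; nra).
         assert (0 <= (1 - rho2^2) * (ss k + ssr)) by (apply Rmult_le_pos; nra). nra.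
      -- assert (E : l * ((1 - rho1 ^ 2) * (ss k + ssr)) + (1 - l) * ((1 - rho2 ^ 2) * (ss k + ssr))
                 = (1 - (l*rho1 + (1-l)*rho2)^2)*(ss k + ssr) - l*(1-l)*(rho1-rho2)^2*(ss k + ssr)) by ring.
         rewrite E. assert (0 <= l*(1-l)*(rho1-rho2)^2*(ss k + ssr)).
         { apply Rmult_le_pos; [|lra]. apply Rmult_le_pos; [nra|apply pow2_ge_0]. }
         lra.
- intros rho Hr ssr1 ssr2 ss1 sr1 ss2 sr2 l [Hs1 HS1] [Hs2 HS2] Hl.
  unfold R_CS. apply conc_min; [exact Hl|]. intros k Hk.
  assert (Hk' : (k < N)%nat) by lia. destruct (HS1 k Hk') as [Ha1 Hb1]. destruct (HS2 k Hk') as [Ha2 Hb2].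
  apply rmin_conc; [exact Hl| |].
  + unfold f_j, cmb.
    eapply Rle_trans.
    * apply Ccap_conc; [apply f_nonneg; lra|apply f_nonneg; lra|exact Hl].
    * apply Ccap_mono.
      -- pose proof (f_nonneg rho (ss1 k) (sr1 k)). pose proof (f_nonneg rho (ss2 k) (sr2 k)). nra.
      -- pose proof (GM (ss1 k) (sr1 k) (ss2 k) (sr2 k) l Ha1 Hb1 Ha2 Hb2 Hl).
         assert (2*rho*(l * sqrt (ss1 k * sr1 k) + (1 - l) * sqrt (ss2 k * sr2 k)) <=
                 2*rho*sqrt ((l * ss1 k + (1 - l) * ss2 k) * (l * sr1 k + (1 - l) * sr2 k))) by (apply Rmult_le_compat_l; lra).
         nra.
  + unfold g_j, cmb.
    replace ((1 - rho ^ 2) * (l * ss1 k + (1 - l) * ss2 k + (l * ssr1 + (1 - l) * ssr2)))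
      with (l * ((1 - rho ^ 2) * (ss1 k + ssr1)) + (1-l) * ((1 - rho ^ 2) * (ss2 k + ssr2))) by ring.
    apply Ccap_conc; [| |exact Hl]; apply Rmult_le_pos; nra.
- intros t1 t2 ssr1 ssr2 ss1 sr1 ss2 sr2 l Ht1 Ht2 [Hs1 HS1] [Hs2 HS2] Hl.
  unfold R_CS. apply qc_min. intros k Hk.
  assert (Hk' : (k < N)%nat) by lia. destruct (HS1 k Hk') as [Ha1 Hb1]. destruct (HS2 k Hk') as [Ha2 Hb2].
  apply rmin_qc.
  + apply Ccap_qc.
    * apply f_nonneg; [apply sqrt_pos|lra|lra].
    * apply f_nonneg; [apply sqrt_pos|lra|lra].
    * unfold f_j, cmb. fold (FF t1 (ss1 k) (sr1 k)). fold (FF t2 (ss2 k) (sr2 k)).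
      fold (FF (l * t1 + (1 - l) * t2) (l * ss1 k + (1 - l) * ss2 k) (l * sr1 k + (1 - l) * sr2 k)).
      apply QF; try lra. apply Rmin_l. apply Rmin_r.
  + assert (Hsq : forall t, 0 <= t -> sqrt t ^ 2 = t) by (intros; simpl; rewrite Rmult_1_r; apply sqrt_sqrt; lra).
    unfold g_j, cmb. rewrite !Hsq by nra.
    apply Ccap_qc.
    * apply Rmult_le_pos; lra.
    * apply Rmult_le_pos; lra.
    * replace (1 - (l * t1 + (1 - l) * t2)) with (l * (1 - t1) + (1-l) * (1 - t2)) by ring.
      replace (l * ss1 k + (1 - l) * ss2 k + (l * ssr1 + (1 - l) * ssr2)) with (l * (ss1 k + ssr1) + (1-l)*(ss2 k + ssr2)) by ring.
      apply QP; lra.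
Qed.
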